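(* For each constant $\beta\in[0,1)$, there exists an indivisible-goods instance in which no allocation satisfies EJR-$\beta$. This remains true even if the inequality $u_j(A)>t-\beta$ in the definition of EJR-$\beta$ is relaxed to $u_j(A)\ge t-\beta$.
   Context: Model: There is a set of agents $N=\{1,\dots,n\}$. The resource $R$ consists of a cake $C=[0,c]$ for a real $c\ge 0$ and a set of indivisible goods $G=\{g_1,\dots,g_m\}$ for an integer $m\ge 0$, with $\max(c,m)>0$. A piece of cake is a union of finitely many disjoint closed subintervals of $C$; its length $\ell(\cdot)$ is the sum of the lengths of its intervals. A bundle $R'=(C',G')$ consists of a piece of cake $C'\subseteq C$ and a set $G'\subseteq G$; its size is $s(R')=\ell(C')+|G'|$. Each agent $i$ approves a bundle $R_i=(C_i,G_i)$, and her utility for a bundle $R'$ is $u_i(R')=s(R_i\cap R')=\ell(C_i\cap C')+|G_i\cap G'|$. A parameter $\alpha\in(0,c+m]$ is given; an allocation is a bundle $A$ with $s(A)\le\alpha$. An instance consists of $R$, $N$, $(R_i)_{i\in N}$ and $\alpha$. It is an indivisible-goods instance if $c=0$ and a cake instance if $m=0$. For a real $t>0$, a group $N^*\subseteq N$ is $t$-cohesive if $|N^*|\ge t\cdot n/\alpha$ and $s(\bigcap_{i\in N^*}R_i)\ge t$. EJR-$\beta$ (for $\beta\ge 0$): an allocation $A$ satisfies EJR-$\beta$ if for every real $t>0$ and every $t$-cohesive group $N^*$, there is $j\in N^*$ with $u_j(A)>t-\beta$. *)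

(* Defs.v *)
From HB Require Import structures.
From mathcomp Require Import all_boot all_order all_algebra.
From mathcomp Require Import reals.
Set Implicit Arguments. Unset Strict Implicit. Unset Printing Implicit Defensive.
Import Order.TTheory GRing.Theory Num.Theory.
Local Open Scope ring_scope.

(* Indivisible-goods instance: cake C = [0,0] (c = 0), agents N = 'I_n,
   goods G = 'I_m, agent i approves the bundle (empty cake, appr i).
   Since the cake has length 0, sizes and utilities reduce to cardinalities
   of sets of goods. *)

Section Defs.
Variables (R : realType) (n m : nat).

(* validity of an indivisible-goods instance: N nonempty, m >= 1
   (so max(c,m) > 0 with c = 0), and alpha in (0, c + m] = (0, m]. *)
Definition valid_instance (alpha : R) : Prop :=
  (0 < n)%N /\ (0 < m)%N /\ 0 < alpha /\ alpha <= m%:R.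

Definition common_approved (appr : 'I_n -> {set 'I_m}) (S : {set 'I_n})
  : {set 'I_m} := [set g | [forall i in S, g \in appr i]].

Definition utility (appr : 'I_n -> {set 'I_m}) (i : 'I_n) (A : {set 'I_m})
  : nat := #|appr i :&: A|.

Definition is_allocation (alpha : R) (A : {set 'I_m}) : Prop :=
  #|A|%:R <= alpha.

Definition cohesive (appr : 'I_n -> {set 'I_m}) (alpha t : R)
  (S : {set 'I_n}) : Prop :=
  t * n%:R / alpha <= #|S|%:R /\ t <= #|common_approved appr S|%:R.

Definition EJR_beta (appr : 'I_n -> {set 'I_m}) (alpha beta : R)
  (A : {set 'I_m}) : Prop :=
  forall (t : R), 0 < t -> forall S : {set 'I_n}, cohesive appr alpha t S ->
    exists2 j, j \in S & t - beta < (utility appr j A)%:R.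

Definition EJR_beta_weak (appr : 'I_n -> {set 'I_m}) (alpha beta : R)
  (A : {set 'I_m}) : Prop :=
  forall (t : R), 0 < t -> forall S : {set 'I_n}, cohesive appr alpha t S ->
    exists2 j, j \in S & t - beta <= (utility appr j A)%:R.

End Defs.

(* Main.v *)
Require Import Defs.
From HB Require Import structures.
From mathcomp Require Import all_boot all_order all_algebra.
From mathcomp Require Import reals.
From mathcomp Require Import lra.
Import Order.TTheory GRing.Theory Num.Theory.
Local Open Scope ring_scope.

Lemma weak_of_strong (R : realType) n m appr (alpha beta : R) (A : {set 'I_m}) :
  @EJR_beta R n m appr alpha beta A -> EJR_beta_weak appr alpha beta A.
Proof.
move=> H t t0 S hS; have [j jS hj] := H t t0 S hS.
by exists j => //; apply: ltW.
Qed.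

Theorem mainTheorem1 (R : realType) (beta : R) :
  0 <= beta -> beta < 1 ->
  exists (n m : nat) (appr : 'I_n -> {set 'I_m}) (alpha : R),
    valid_instance n m alpha /\
    (forall A : {set 'I_m}, is_allocation alpha A -> ~ EJR_beta appr alpha beta A) /\
    (forall A : {set 'I_m}, is_allocation alpha A -> ~ EJR_beta_weak appr alpha beta A).
Proof.
move=> b0 b1.
pose alpha : R := (3 + beta) / 2.
have a0 : 0 < alpha by rewrite /alpha; lra.
have weak : forall A : {set 'I_2}, is_allocation alpha A ->
    ~ EJR_beta_weak (fun _ : 'I_1 => [set: 'I_2]) alpha beta A.
  move=> A hA H.
  have [] := H alpha a0 [set: 'I_1].
    split.
      rewrite cardsT card_ord mulr1 divff ?lt0r_neq0 //.
    have -> : common_approved (fun _ : 'I_1 => [set: 'I_2]) [set: 'I_1] = [set: 'I_2].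
      by apply/setP => g; rewrite !inE; apply/forallP => i; rewrite !inE.
    rewrite cardsT card_ord /alpha; lra.
  move=> j _; rewrite /utility setTI => hj.
  move: hA; rewrite /is_allocation => hA.
  have hA1 : (#|A| <= 1)%N.
    rewrite leqNgt; apply/negP => h2.
    have : (2%:R : R) <= #|A|%:R by rewrite ler_nat.
    move: hA; rewrite /alpha; lra.
  have : (#|A|%:R : R) <= 1 by rewrite (_ : 1 = 1%:R) // ler_nat.
  move: hj; rewrite /alpha; lra.
exists 1%N, 2%N, (fun _ => [set: 'I_2]), alpha.
split; first by rewrite /valid_instance /alpha; split => //; split => //; split => //; lra.
split; last exact: weak.
move=> A hA H; apply: (weak A hA); exact: weak_of_strong.
Qed.
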